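(* Let $k\le n$ be positive integers, $m=\binom nk$, let $\mu$ be an absolute operator norm on $\mathbb{C}^{m\times m}$, and let $p$ and $r$ be positive integers. Then $$\theta_k(\mu,\ell_p)\le n^{\left[\frac{k}{r}-\frac{k}{p}\right]^+}\theta_k(\mu,\ell_r),$$ where $[x]^+=\max\{x,0\}$.
   Context: $C_k(B)$ is the $k$th compound of $B\in\mathbb{C}^{n\times n}$ (the $\binom nk\times\binom nk$ matrix of $k\times k$ minors). For a vector norm $\nu$ on $\mathbb{C}^n$ and a norm $\mu$ on $\mathbb{C}^{m\times m}$, $\theta_k(\mu,\nu)=\max\{\mu(C_k(B)): B\in\mathbb{C}^{n\times n},\ \nu(\mathrm{col}_i(B))=1,\ i=1,\ldots,n\}$, where $\mathrm{col}_i(B)$ is the $i$th column. $\ell_p$ denotes the vector $p$-norm. An absolute operator norm is a matrix norm induced by an absolute vector norm. *)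

(* Defs.v *)
From HB Require Import structures.
From mathcomp Require Import all_boot all_order all_algebra.
From mathcomp Require Import all_classical all_reals.
From mathcomp Require Import exp.
From mathcomp Require Import complex.

Set Implicit Arguments.
Unset Strict Implicit.
Unset Printing Implicit Defensive.

Import Order.TTheory GRing.Theory Num.Theory.
Local Open Scope ring_scope.
Local Open Scope classical_set_scope.

Section Defs.
Variable R : realType.
Local Notation C := R[i].

Definition cabs (z : C) : R := Num.sqrt (complex.Re z ^+ 2 + complex.Im z ^+ 2).

Definition ksets (n k : nat) : {set {set 'I_n}} := [set S : {set 'I_n} | #|S| == k].

Lemma card_ksets (n k : nat) : #|ksets n k| = 'C(n, k).
Proof. by rewrite /ksets card_draws card_ord. Qed.

Definition kset_of (n k : nat) (I : 'I_('C(n, k))) : {set 'I_n} :=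
  enum_val (cast_ord (esym (card_ksets n k)) I).

(* entry (i,j) of the submatrix of B with rows S and columns T
   (elements of S, T listed in increasing order) *)
Definition subentry (n : nat) (B : 'M[C]_n) (S T : {set 'I_n}) (i j : nat) : C :=
  match onth (enum S) i, onth (enum T) j with
  | Some a, Some b => B a b
  | _, _ => 0
  end.

Definition compound (n k : nat) (B : 'M[C]_n) : 'M[C]_('C(n, k)) :=
  \matrix_(I < 'C(n, k), J < 'C(n, k)) \det (\matrix_(i < k, j < k)
      subentry B (kset_of I) (kset_of J) i j).

Definition is_vnorm (n : nat) (nu : 'cV[C]_n -> R) : Prop :=
  [/\ forall x : 'cV[C]_n, 0 <= nu x,
      forall x : 'cV[C]_n, nu x = 0 -> x = 0,
      forall (a : C) (x : 'cV[C]_n), nu (a *: x) = cabs a * nu x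
    & forall x y : 'cV[C]_n, nu (x + y) <= nu x + nu y].

Definition absolute (n : nat) (nu : 'cV[C]_n -> R) : Prop :=
  forall x y : 'cV[C]_n, (forall i : 'I_n, cabs (x i 0) = cabs (y i 0)) -> nu x = nu y.

Definition opnorm (n : nat) (nu : 'cV[C]_n -> R) (A : 'M[C]_n) : R :=
  sup [set nu (A *m x) | x in [set x : 'cV[C]_n | nu x = 1]].

Definition abs_opnorm (m : nat) (mu : 'M[C]_m -> R) : Prop :=
  exists nu : 'cV[C]_m -> R,
    [/\ is_vnorm nu, absolute nu & forall A, mu A = opnorm nu A].

Definition lp (n p : nat) (x : 'cV[C]_n) : R :=
  powR (\sum_(i < n) cabs (x i 0) ^+ p) (p%:R^-1).

Definition theta (n k : nat) (mu : 'M[C]_('C(n, k)) -> R) (nu : 'cV[C]_n -> R) : R :=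
  sup [set mu (compound k B) | B in [set B : 'M[C]_n | forall i : 'I_n, nu (col i B) = 1]].

End Defs.

(* Main.v *)
Require Import Defs.
From HB Require Import structures.
From mathcomp Require Import all_boot all_order all_algebra.
From mathcomp Require Import all_classical all_reals.
From mathcomp Require Import exp.
From mathcomp Require Import complex.
From mathcomp Require Import fingroup perm.
From mathcomp Require Import ring lra.
Set Implicit Arguments.
Unset Strict Implicit.
Unset Printing Implicit Defensive.
Import Order.TTheory GRing.Theory Num.Theory.
Local Open Scope ring_scope.
Local Open Scope complex_scope.


Lemma cabsE (R : realType) (z : R[i]) : (cabs z)%:C = `|z|.
Proof. by case: z. Qed.

Lemma cabs_ge0 (R : realType) (z : R[i]) : 0 <= cabs z.
Proof. by rewrite /cabs sqrtr_ge0. Qed.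

Lemma cabsM (R : realType) (a b : R[i]) : cabs (a * b) = cabs a * cabs b.
Proof. by apply: complexI; rewrite rmorphM /= !cabsE normrM. Qed.

Lemma cabsD (R : realType) (a b : R[i]) : cabs (a + b) <= cabs a + cabs b.
Proof. by rewrite -lecR rmorphD /= !cabsE ler_normD. Qed.

Lemma cabsN (R : realType) (a : R[i]) : cabs (- a) = cabs a.
Proof. by apply: complexI; rewrite !cabsE normrN. Qed.

Lemma cabs0 (R : realType) : cabs (0 : R[i]) = 0.
Proof. by apply: complexI; rewrite !cabsE normr0. Qed.

Lemma cabs1 (R : realType) : cabs (1 : R[i]) = 1.
Proof. by apply: complexI; rewrite !cabsE normr1. Qed.

Lemma cabs_eq0 (R : realType) (a : R[i]) : cabs a = 0 -> a = 0.
Proof. by move=> h; apply/normr0_eq0; rewrite -cabsE h. Qed.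

Lemma cabsR (R : realType) (x : R) : 0 <= x -> cabs (x%:C) = x.
Proof. by move=> x0; apply: complexI; rewrite cabsE ger0_norm // ler0c. Qed.


Lemma nu0 (R : realType) d (nu : 'cV[R[i]]_d -> R) : is_vnorm nu -> nu 0 = 0.
Proof. by case=> _ _ hs _; rewrite -(scale0r (0 : 'cV[R[i]]_d)) hs cabs0 mul0r. Qed.

Lemma nu_sum (R : realType) d (nu : 'cV[R[i]]_d -> R) (I : finType) (F : I -> 'cV[R[i]]_d) :
  is_vnorm nu -> nu (\sum_i F i) <= \sum_i nu (F i).
Proof.
move=> hn; have [_ _ _ ht] := hn.
apply: (big_ind2 (fun x y => nu x <= y)) => //; first by rewrite nu0.
by move=> x1 x2 y1 y2 h1 h2; apply: le_trans (ht _ _) (lerD h1 h2).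
Qed.

Lemma nu_scaleR (R : realType) d (nu : 'cV[R[i]]_d -> R) (c : R) x :
  is_vnorm nu -> 0 <= c -> nu (c%:C *: x) = c * nu x.
Proof. by case=> _ _ hs _ c0; rewrite hs cabsR. Qed.

Lemma nu_step (R : realType) d (nu : 'cV[R[i]]_d -> R) (j : 'I_d) (x y : 'cV[R[i]]_d) :
  is_vnorm nu -> absolute nu ->
  (forall i, i != j -> x i 0 = y i 0) -> cabs (x j 0) <= cabs (y j 0) -> nu x <= nu y.
Proof.
move=> hn ha hxy hj; have [h0 _ hs ht] := hn.
have [yj0|yj0] := eqVneq (y j 0) 0.
  have xj0 : x j 0 = 0 by apply: cabs_eq0; apply: le_anti; rewrite cabs_ge0 andbT -(cabs0 R) -yj0.
  suff -> : x = y by [].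
  apply/matrixP => i l; rewrite (ord1 l); have [->|ij] := eqVneq i j; first by rewrite xj0 yj0.
  exact: hxy.
have cy0 : 0 < cabs (y j 0) by rewrite lt_def cabs_ge0 andbT; apply/eqP => /cabs_eq0; exact/eqP.
set t := cabs (x j 0) / cabs (y j 0).
have t0 : 0 <= t by rewrite divr_ge0 ?cabs_ge0 // ltW.
have t1 : t <= 1 by rewrite ler_pdivrMr // mul1r.
set yb : 'cV[R[i]]_d := \col_i (if i == j then - y i 0 else y i 0).
have nyb : nu yb = nu y.
  apply: ha => i; rewrite mxE; case: eqP => // _; exact: cabsN.
set z := ((1 + t) / 2)%:C *: y + ((1 - t) / 2)%:C *: yb.
have nz : nu x = nu z.
  apply: ha => i; rewrite /z !mxE; have [->|ij] := eqVneq i j.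
    rewrite mulrN -mulNr -mulrDl -rmorphN -rmorphD cabsM cabsR; last lra.
    have -> : (1 + t) / 2 + - ((1 - t) / 2) = t :> R by field.
    by rewrite /t divfK // gt_eqF.
  rewrite -mulrDl -rmorphD hxy //.
  have -> : (1 + t) / 2 + (1 - t) / 2 = 1 :> R by field.
  by rewrite mul1r.
rewrite nz; apply: le_trans (ht _ _) _.
rewrite !nu_scaleR //; try lra.
rewrite nyb; have -> : (1 + t) / 2 * nu y + (1 - t) / 2 * nu y = nu y :> R by field.
by [].
Qed.

Lemma nu_mono (R : realType) d (nu : 'cV[R[i]]_d -> R) (x y : 'cV[R[i]]_d) :
  is_vnorm nu -> absolute nu ->
  (forall i, cabs (x i 0) <= cabs (y i 0)) -> nu x <= nu y.
Proof.
move=> hn ha hxy.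
pose w (l : nat) : 'cV[R[i]]_d := \col_i (if (i < l)%N then x i 0 else y i 0).
have wd : w d = x by apply/matrixP => i l; rewrite (ord1 l) mxE ltn_ord.
have w0 : w 0%N = y by apply/matrixP => i l; rewrite (ord1 l) mxE.
suff H : forall l, (l <= d)%N -> nu (w l) <= nu y by rewrite -wd H.
elim=> [|l IH] ld; first by rewrite w0.
apply: le_trans (IH (ltnW ld)).
apply: (@nu_step _ _ _ (Ordinal ld)) => //.
  move=> i ij; rewrite !mxE ltnS leq_eqVlt.
  have -> : (i == l :> nat) = false by apply/negbTE; apply: contra ij => /eqP h; apply/eqP/val_inj.
  by [].
by rewrite !mxE /= ltnn ltnSn.
Qed.


Lemma cabs_sum (R : realType) (I : finType) (F : I -> R[i]) :
  cabs (\sum_i F i) <= \sum_i cabs (F i).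
Proof.
apply: (big_ind2 (fun x y => cabs x <= y)) => //; first by rewrite cabs0.
move=> x1 x2 y1 y2 h1 h2; exact: (le_trans (cabsD x1 y1) (lerD h1 h2)).
Qed.

Lemma col_delta_sum (R : realType) d (x : 'cV[R[i]]_d) :
  x = \sum_i x i 0 *: delta_mx i 0.
Proof.
rewrite {1}(matrix_sum_delta x); apply: eq_bigr => i _.
by rewrite big_ord1.
Qed.

Lemma nu_delta_gt0 (R : realType) d (nu : 'cV[R[i]]_d -> R) (i : 'I_d) :
  is_vnorm nu -> 0 < nu (delta_mx i 0).
Proof.
case=> h0 hz _ _; rewrite lt_def h0 andbT; apply/eqP => /hz /matrixP /(_ i 0).
by rewrite !mxE !eqxx /= => /eqP; rewrite oner_eq0.
Qed.

Lemma nu_upper (R : realType) d (nu : 'cV[R[i]]_d -> R) (x : 'cV[R[i]]_d) :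
  is_vnorm nu ->
  nu x <= (\sum_i nu (delta_mx i 0)) * \sum_i cabs (x i 0).
Proof.
move=> hn; have [h0 _ hs _] := hn.
rewrite {1}(col_delta_sum x); apply: le_trans (nu_sum _ hn) _.
rewrite mulr_sumr; apply: ler_sum => i _; rewrite hs mulrC ler_wpM2r ?cabs_ge0 //.
rewrite (bigD1 i) //= lerDl sumr_ge0 // => j _; exact: h0.
Qed.

Lemma nu_lower (R : realType) d (nu : 'cV[R[i]]_d -> R) (x : 'cV[R[i]]_d) :
  is_vnorm nu -> absolute nu ->
  \sum_i cabs (x i 0) <= nu x * \sum_i (nu (delta_mx i 0))^-1.
Proof.
move=> hn ha; have [h0 _ hs _] := hn.
rewrite mulr_sumr; apply: ler_sum => i _.
have p := nu_delta_gt0 i hn.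
rewrite ler_pdivlMr // -hs; apply: nu_mono => // l.
rewrite !mxE; case: eqP => [->|_]; first by rewrite andbT mulr1.
by rewrite mulr0 cabs0 cabs_ge0.
Qed.

Lemma nu_opbound (R : realType) d (nu : 'cV[R[i]]_d -> R) :
  is_vnorm nu -> absolute nu -> exists K : R, forall (A : 'M[R[i]]_d) (a : R),
  (forall i j, cabs (A i j) <= a) -> forall x, nu x = 1 -> nu (A *m x) <= K * a.
Proof.
move=> hn ha; have [h0 _ hs _] := hn.
set M1 := \sum_i nu (delta_mx i 0); set M2 := \sum_i (nu (delta_mx i 0))^-1.
have M10 : 0 <= M1 by rewrite sumr_ge0.
exists (M1 * d%:R * M2) => A a hA x nx.
have a0 : forall i j : 'I_d, 0 <= a by move=> i j; exact: le_trans (cabs_ge0 _) (hA i j).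
apply: le_trans (nu_upper _ hn) _.
rewrite -!mulrA ler_wpM2l //.
have H1 : \sum_i cabs ((A *m x) i 0) <= \sum_(i < d) (a * \sum_j cabs (x j 0)).
  apply: ler_sum => i _; rewrite mxE; apply: le_trans (cabs_sum _) _.
  rewrite mulr_sumr; apply: ler_sum => j _; rewrite cabsM ler_wpM2r ?cabs_ge0 //.
apply: le_trans H1 _; rewrite sumr_const card_ord -[X in X <= _]mulr_natl.
have [d0|dpos] := posnP d.
  have -> : (d%:R : R) = 0 by rewrite d0.
  by rewrite !mul0r.

have aa := a0 (Ordinal dpos) (Ordinal dpos).
rewrite ler_wpM2l ?ler0n // [M2 * a]mulrC ler_wpM2l //.
by have := nu_lower x hn ha; rewrite nx mul1r.
Qed.

Lemma nu_unit (R : realType) d (nu : 'cV[R[i]]_d -> R) :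
  (0 < d)%N -> is_vnorm nu -> exists x, nu x = 1.
Proof.
move=> dp hn; have p := nu_delta_gt0 (Ordinal dp) hn.
pose c := (nu (delta_mx (Ordinal dp) 0))^-1.
exists (c%:C *: delta_mx (Ordinal dp) 0).
by rewrite nu_scaleR // ?invr_ge0 ?ltW // /c mulVf // gt_eqF.
Qed.

Lemma opnorm_hasub (R : realType) d (nu : 'cV[R[i]]_d -> R) (A : 'M[R[i]]_d) :
  is_vnorm nu -> absolute nu ->
  has_ubound [set nu (A *m x) | x in [set x : 'cV[R[i]]_d | nu x = 1]]%classic.
Proof.
move=> hn ha; have [K hK] := nu_opbound hn ha.
exists (K * \sum_i \sum_j cabs (A i j)) => _ [x nx <-].
apply: hK => // i j; rewrite (bigD1 i) //= (bigD1 j) //= -addrA lerDl.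
rewrite addr_ge0 ?sumr_ge0 // => *; rewrite ?sumr_ge0 // => *; exact: cabs_ge0.
Qed.

Lemma opnorm_ub (R : realType) d (nu : 'cV[R[i]]_d -> R) (A : 'M[R[i]]_d) x :
  is_vnorm nu -> absolute nu -> nu x = 1 -> nu (A *m x) <= opnorm nu A.
Proof.
move=> hn ha nx; apply: (ub_le_sup (opnorm_hasub A hn ha)); by exists x.
Qed.

Lemma opnorm_le (R : realType) d (nu : 'cV[R[i]]_d -> R) (A : 'M[R[i]]_d) b :
  (0 < d)%N -> is_vnorm nu ->
  (forall x, nu x = 1 -> nu (A *m x) <= b) -> opnorm nu A <= b.
Proof.
move=> dp hn hb; have [x nx] := nu_unit dp hn.
apply: ge_sup; first by exists (nu (A *m x)), x.
by move=> _ [y ny <-]; apply: hb.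
Qed.

Lemma opnorm_ge0 (R : realType) d (nu : 'cV[R[i]]_d -> R) (A : 'M[R[i]]_d) :
  (0 < d)%N -> is_vnorm nu -> absolute nu -> 0 <= opnorm nu A.
Proof.
move=> dp hn ha; have [x nx] := nu_unit dp hn; have [h0 _ _ _] := hn.
exact: le_trans (h0 _) (opnorm_ub A hn ha nx).
Qed.

Lemma opnorm_diag (R : realType) d (nu : 'cV[R[i]]_d -> R) (A : 'M[R[i]]_d)
  (g : 'rV[R[i]]_d) (G : R) :
  (0 < d)%N -> is_vnorm nu -> absolute nu -> (forall i, cabs (g 0 i) <= G) ->
  opnorm nu (A *m diag_mx g) <= G * opnorm nu A.
Proof.
move=> dp hn ha hg; have [h0 hz hs _] := hn.
have G0 : 0 <= G by exact: le_trans (cabs_ge0 _) (hg (Ordinal dp)).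
have op0 := opnorm_ge0 A dp hn ha.
apply: opnorm_le => // x nx; rewrite -mulmxA.
set y := diag_mx g *m x.
have ny : nu y <= G.
  have -> : G = nu (G%:C *: x) by rewrite nu_scaleR // nx mulr1.
  apply: nu_mono => // i; rewrite /y mul_diag_mx !mxE cabsM cabsM cabsR //.
  by rewrite ler_wpM2r ?cabs_ge0.
have [y0|y0] := eqVneq (nu y) 0.
  by rewrite (hz _ y0) mulmx0 (nu0 hn) mulr_ge0.
have yp : 0 < nu y by rewrite lt_def y0 h0.
pose c := nu y; pose y' := (c^-1)%:C *: y.
have ny' : nu y' = 1 by rewrite /y' nu_scaleR ?invr_ge0 ?ltW // mulVf.
have -> : y = c%:C *: y'.
  by rewrite /y' scalerA -rmorphM /= divff // scale1r.
rewrite -scalemxAr (nu_scaleR _ hn (ltW yp)).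
apply: le_trans (ler_wpM2l (ltW yp) (opnorm_ub A hn ha ny')) _.
by rewrite ler_wpM2r.
Qed.


Lemma pw_root (R : realType) (S : R) (q : nat) :
  0 <= S -> (0 < q)%N -> (S `^ q%:R^-1) `^ q%:R = S.
Proof.
move=> S0 q0; rewrite -powRrM mulVf ?powRr1 // pnatr_eq0 -lt0n //.
Qed.

Lemma pw_root2 (R : realType) (a : R) (q : nat) :
  0 <= a -> (0 < q)%N -> (a ^+ q) `^ q%:R^-1 = a.
Proof.
move=> a0 q0; rewrite -powR_mulrn // -powRrM mulfV ?powRr1 // pnatr_eq0 -lt0n //.
Qed.

Lemma lp_ge0 (R : realType) n p (x : 'cV[R[i]]_n) : 0 <= lp p x.
Proof. exact: powR_ge0. Qed.

Lemma sum_pow_ge0 (R : realType) n p (x : 'cV[R[i]]_n) :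
  0 <= \sum_i cabs (x i 0) ^+ p.
Proof. by apply: sumr_ge0 => i _; rewrite exprn_ge0 // cabs_ge0. Qed.

Lemma lp_scale (R : realType) n p (x : 'cV[R[i]]_n) (c : R) :
  (0 < p)%N -> 0 <= c -> lp p (c%:C *: x) = c * lp p x.
Proof.
move=> p0 c0; rewrite /lp.
have -> : \sum_i cabs ((c%:C *: x) i 0) ^+ p = c ^+ p * \sum_i cabs (x i 0) ^+ p.
  rewrite mulr_sumr; apply: eq_bigr => i _; by rewrite mxE cabsM cabsR // exprMn.
rewrite powRM ?exprn_ge0 ?sum_pow_ge0 // pw_root2 //.
Qed.

Lemma lp_entry (R : realType) n p (x : 'cV[R[i]]_n) (i : 'I_n) :
  (0 < p)%N -> cabs (x i 0) <= lp p x.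
Proof.
move=> p0; rewrite /lp -{1}(@pw_root2 _ (cabs (x i 0)) p) ?cabs_ge0 //.
apply: ge0_ler_powR; rewrite ?invr_ge0 ?ler0n ?nnegrE ?exprn_ge0 ?cabs_ge0 ?sum_pow_ge0 //.
rewrite (bigD1 i) //= lerDl sumr_ge0 // => j _; rewrite ?exprn_ge0 ?cabs_ge0 //.
all: by [].
Qed.

Lemma lp_eq1 (R : realType) n p (x : 'cV[R[i]]_n) :
  (0 < p)%N -> lp p x = 1 -> \sum_i cabs (x i 0) ^+ p = 1.
Proof.
move=> p0 h; rewrite -(pw_root (sum_pow_ge0 p x) p0); rewrite /lp in h.
by rewrite h powR1.
Qed.

Lemma lp_pos (R : realType) n p r (x : 'cV[R[i]]_n) :
  (0 < p)%N -> (0 < r)%N -> lp p x = 1 -> 0 < lp r x.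
Proof.
move=> p0 r0 h; rewrite lt_def lp_ge0 andbT; apply/eqP => h0.
have S0 : \sum_i cabs (x i 0) ^+ r = 0 by apply: powR_eq0_eq0 h0.
have xi0 : forall i, cabs (x i 0) = 0.
  move=> i; have h1 : cabs (x i 0) ^+ r = 0.
    apply: (psumr_eq0P _ S0) => // j _; by rewrite exprn_ge0 // cabs_ge0.
  by move/eqP: h1; rewrite expf_eq0 r0 /= => /eqP.
have := lp_eq1 p0 h; under eq_bigr do rewrite xi0 expr0n (gtn_eqF p0).
by rewrite sumr_const mul0rn => /eqP; rewrite eq_sym oner_eq0.
Qed.

Lemma one_le_pw (R : realType) n (e : R) : (0 < n)%N -> 0 <= e -> 1 <= (n%:R : R) `^ e.
Proof.
move=> n0 e0; have h1 : (1 <= (n%:R : R)) by rewrite ler1n.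
have := ler_powR h1 e0; rewrite powRr0; apply.
Qed.

Lemma term_le_sum (R : realType) n p (x : 'cV[R[i]]_n) i :
  cabs (x i 0) ^+ p <= \sum_j cabs (x j 0) ^+ p.
Proof.
rewrite (bigD1 i) //= lerDl; apply: sumr_ge0 => j _; by rewrite exprn_ge0 // cabs_ge0.
Qed.

Lemma lp_bound_ge (R : realType) n p r (x : 'cV[R[i]]_n) :
  (0 < p)%N -> (0 < r)%N -> (p <= r)%N -> lp p x = 1 -> lp r x <= 1.
Proof.
move=> p0 r0 pr h; have S1 := lp_eq1 p0 h.
have a1 : forall i, cabs (x i 0) <= 1.
  move=> i; rewrite -(ler_pXn2r p0) ?nnegrE ?cabs_ge0 // expr1n -S1.
  exact: term_le_sum.
have Sr : \sum_i cabs (x i 0) ^+ r <= 1.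
  rewrite -S1; apply: ler_sum => i _; apply: ler_wiXn2l => //; exact: cabs_ge0.
have e0 : 0 <= (r%:R : R)^-1 by rewrite invr_ge0 ler0n.
have := ge0_ler_powR e0 _ _ Sr; rewrite powR1; apply.
- by rewrite nnegrE sum_pow_ge0.
- by rewrite nnegrE.
Qed.

Lemma lp_bound_lt (R : realType) n p r (x : 'cV[R[i]]_n) :
  (0 < n)%N -> (0 < r)%N -> (r < p)%N -> lp p x = 1 ->
  lp r x <= (n%:R : R) `^ (r%:R^-1 - p%:R^-1).
Proof.
move=> n0 r0 rp h; have p0 : (0 < p)%N by apply: leq_trans rp.
have S1 := lp_eq1 p0 h.
set N : R := n%:R; set pp : R := p%:R; set rr : R := r%:R.
have N0 : 0 < N by rewrite ltr0n.
have rr0 : 0 < rr by rewrite ltr0n.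
have pp0 : 0 < pp by rewrite ltr0n.
have rpp : rr < pp by rewrite ltr_nat.
set e : R := (pp - rr) / pp.
set c : R := N `^ (- e).
have c0 : 0 < c by rewrite powR_gt0.
set P : R := pp / rr; set Q : R := pp / (pp - rr).
have P0 : 0 < P by rewrite divr_gt0.
have Q0 : 0 < Q by rewrite divr_gt0 // subr_gt0.
have PQ : P^-1 + Q^-1 = 1 by rewrite /P /Q !invf_div; field; rewrite ?gt_eqF ?subr_gt0 //.
have Hi : forall i, cabs (x i 0) ^+ r * c <= cabs (x i 0) ^+ p / P + N^-1 / Q.
  move=> i; have a0 := cabs_ge0 (x i 0).
  apply: le_trans (conjugate_powR (exprn_ge0 r a0) (ltW c0) P0 Q0 PQ) _.
  have key : (cabs (x i 0) ^+ r) `^ P = cabs (x i 0) ^+ p.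
    rewrite -(powR_mulrn r a0) -powRrM /P /rr mulrC divfK ?gt_eqF //.
    exact: powR_mulrn.
  rewrite key.
  rewrite /c -powRrM /e /Q.
  have -> : - ((pp - rr) / pp) * (pp / (pp - rr)) = -1.
    by field; rewrite ?gt_eqF ?subr_gt0 //.
  by rewrite powR_inv1 // ltW.
have Hs : (\sum_i cabs (x i 0) ^+ r) * c <= 1.
  rewrite mulr_suml; apply: le_trans (ler_sum _ (fun i _ => Hi i)) _.
  rewrite big_split /= -mulr_suml S1 sumr_const card_ord -mulr_natl.
  rewrite /P /Q /N; rewrite !invf_div.
  have nn : (n%:R : R) != 0 by rewrite pnatr_eq0 -lt0n.
  rewrite [n%:R * _]mulrA mulfV // !mul1r.
  have -> : rr / pp + (pp - rr) / pp = 1 by field; rewrite ?gt_eqF ?subr_gt0 //.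
  by [].
have HS : \sum_i cabs (x i 0) ^+ r <= N `^ e.
  have -> : N `^ e = c^-1 by rewrite /c powRN invrK.
  by rewrite -(ler_pM2r c0) mulVf ?gt_eqF.
rewrite /lp; apply: le_trans (ge0_ler_powR _ _ _ HS) _.
- by rewrite invr_ge0 ler0n.
- by rewrite nnegrE sum_pow_ge0.
- by rewrite nnegrE powR_ge0.
rewrite -powRrM /e; have -> : (pp - rr) / pp * rr^-1 = rr^-1 - pp^-1 by field; rewrite ?gt_eqF ?subr_gt0 //.
by rewrite ?gt_eqF ?subr_gt0 //.
Qed.

Lemma lp_bound (R : realType) n p r (x : 'cV[R[i]]_n) :
  (0 < n)%N -> (0 < p)%N -> (0 < r)%N -> lp p x = 1 ->
  lp r x <= (n%:R : R) `^ (Num.max (r%:R^-1 - p%:R^-1) 0).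
Proof.
move=> n0 p0 r0 h; have [pr|rp] := leqP p r.
  apply: le_trans (lp_bound_ge p0 r0 pr h) _; apply: one_le_pw => //.
  by rewrite le_max lexx orbT.
apply: le_trans (lp_bound_lt n0 r0 rp h) _; apply: ler_powR.
  by rewrite ler1n.
by rewrite le_max lexx.
Qed.


Definition fT (R : realType) n (e : 'I_n -> R) (T : {set 'I_n}) (j : nat) : R[i] :=
  match onth (enum T) j with Some b => (e b)%:C | None => 1 end.

Lemma subentry_scale (R : realType) n (B' : 'M[R[i]]_n) (e : 'I_n -> R) S T i j :
  subentry (\matrix_(a, b) (B' a b * (e b)%:C)) S T i j = subentry B' S T i j * fT e T j.
Proof.
rewrite /subentry /fT; case: (onth (enum S) i) => [a|]; case: (onth (enum T) j) => [b|] //.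
- by rewrite mxE.
- by rewrite mul0r.
- by rewrite mul0r.
- by rewrite mul0r.
Qed.

Lemma det_colscale (R : comUnitRingType) k (M : 'M[R]_k) (f : 'I_k -> R) :
  \det (\matrix_(i, j) (M i j * f j)) = \det M * \prod_j f j.
Proof.
have -> : \matrix_(i, j) (M i j * f j) = M *m diag_mx (\row_j f j).
  by rewrite mul_mx_diag; apply/matrixP => i j; rewrite !mxE.
by rewrite det_mulmx det_diag; congr (_ * _); apply: eq_bigr => j _; rewrite mxE.
Qed.

Lemma compound_scale (R : realType) n k (B' : 'M[R[i]]_n) (e : 'I_n -> R) :
  compound k (\matrix_(a, b) (B' a b * (e b)%:C)) =
  compound k B' *m diag_mx (\row_J \prod_(j < k) fT e (kset_of J) j).
Proof.
rewrite mul_mx_diag; apply/matrixP => I J; rewrite !mxE -det_colscale.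
congr (\det _); apply/matrixP => i j; rewrite !mxE; exact: subentry_scale.
Qed.

Lemma cabs_prod (R : realType) (I : finType) (F : I -> R[i]) :
  cabs (\prod_i F i) = \prod_i cabs (F i).
Proof. exact: (big_morph _ (@cabsM R) (cabs1 R)). Qed.

Lemma cabsX (R : realType) (z : R[i]) m : cabs (z ^+ m) = cabs z ^+ m.
Proof. by apply: complexI; rewrite rmorphXn /= !cabsE normrX. Qed.

Lemma fT_bound (R : realType) n (e : 'I_n -> R) (s : R) T j :
  1 <= s -> (forall b, 0 <= e b <= s) -> cabs (fT e T j) <= s.
Proof.
move=> s1 he; rewrite /fT; case: (onth (enum T) j) => [b|].
  by have /andP[h1 h2] := he b; rewrite cabsR.
by rewrite cabs1.
Qed.

Lemma gJ_bound (R : realType) n k (e : 'I_n -> R) (s : R) (J : 'I_('C(n, k))) :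
  1 <= s -> (forall b, 0 <= e b <= s) ->
  cabs ((\row_J \prod_(j < k) fT e (kset_of J) j) 0 J) <= s ^+ k.
Proof.
move=> s1 he; rewrite mxE cabs_prod.
have -> : s ^+ k = \prod_(j < k) s by rewrite prodr_const card_ord.
apply: ler_prod => j _; rewrite cabs_ge0 /=; exact: fT_bound.
Qed.

Lemma det_bound (R : realType) k (M : 'M[R[i]]_k) :
  (forall i j, cabs (M i j) <= 1) -> cabs (\det M) <= #|{perm 'I_k}|%:R.
Proof.
move=> hM; rewrite /determinant; apply: le_trans (cabs_sum _) _.
rewrite -sum1_card natr_sum; apply: ler_sum => s _.
rewrite cabsM cabsX cabsN cabs1 expr1n mul1r cabs_prod.
apply: prodr_ile1 => i _; rewrite cabs_ge0; exact: hM.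
Qed.

Lemma compound_bound (R : realType) n k (B : 'M[R[i]]_n) I J :
  (forall a b, cabs (B a b) <= 1) -> cabs (compound k B I J) <= #|{perm 'I_k}|%:R.
Proof.
move=> hB; rewrite mxE; apply: det_bound => i j; rewrite mxE /subentry.
case: (onth (enum (kset_of I)) i) => [a|]; case: (onth (enum (kset_of J)) j) => [b|] //; by rewrite cabs0.
Qed.


Lemma lp_col1 (R : realType) n p (i : 'I_n) :
  (0 < p)%N -> lp p (col i (1%:M : 'M[R[i]]_n)) = 1.
Proof.
move=> p0; rewrite /lp (bigD1 i) //= big1 ?addr0.
  by rewrite !mxE eqxx cabs1 expr1n powR1.
move=> j ji; rewrite !mxE (negbTE ji) cabs0 expr0n; by case: p p0.
Qed.

Lemma col_scale (R : realType) n (B : 'M[R[i]]_n) (e : 'I_n -> R) b :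
  col b (\matrix_(a, b) (B a b * (e b)%:C)) = (e b)%:C *: col b B.
Proof. by apply/matrixP => a l; rewrite !mxE mulrC. Qed.

Lemma theta_ub (R : realType) n k (nu : 'cV[R[i]]_('C(n, k)) -> R) r :
  (0 < 'C(n, k))%N -> (0 < r)%N -> is_vnorm nu -> absolute nu -> exists K : R,
  forall B : 'M[R[i]]_n, (forall b, lp r (col b B) = 1) ->
    opnorm nu (compound k B) <= K.
Proof.
move=> mp r0 hn ha; have [K hK] := nu_opbound hn ha.
exists (K * #|{perm 'I_k}|%:R) => B hB.
apply: opnorm_le => // x nx; apply: hK => // I J; apply: compound_bound => a b.
by have := lp_entry (col b B) a r0; rewrite hB !mxE.
Qed.

Unset Implicit Arguments.

Theorem lemma2p12 (R : realType) (n k : nat) (mu : 'M[R[i]]_('C(n, k)) -> R)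
    (p r : nat) :
  (0 < k)%N -> (k <= n)%N -> abs_opnorm mu -> (0 < p)%N -> (0 < r)%N ->
  @theta R n k mu (@lp R n p) <=
    powR (n%:R : R) (Num.max (k%:R / r%:R - k%:R / p%:R) 0) * @theta R n k mu (@lp R n r).
Proof.
move=> k0 kn [nu [hn ha hmu]] p0 r0.
have mp : (0 < 'C(n, k))%N by rewrite bin_gt0.
have n0 : (0 < n)%N by apply: leq_trans kn.
set s : R := (n%:R : R) `^ (Num.max (r%:R^-1 - p%:R^-1) 0).
have s1 : 1 <= s by apply: one_le_pw => //; rewrite le_max lexx orbT.
have s0 : 0 <= s by apply: le_trans s1.
have -> : (n%:R : R) `^ (Num.max (k%:R / r%:R - k%:R / p%:R) 0) = s ^+ k.
  rewrite -(powR_mulrn k s0) /s -powRrM maxr_pMl ?ler0n // mul0r.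
  congr (_ `^ Num.max _ 0).
  have rr : (r%:R : R) != 0 by rewrite pnatr_eq0 -lt0n.
  have pp : (p%:R : R) != 0 by rewrite pnatr_eq0 -lt0n.
  by rewrite mulrBl [_^-1 * k%:R]mulrC [p%:R^-1 * _]mulrC.
have [K hK] := theta_ub mp r0 hn ha.
have hub : has_ubound [set mu (compound k B) | B in
    [set B : 'M[R[i]]_n | forall i : 'I_n, lp r (col i B) = 1]]%classic.
  by exists K => _ [B hB <-]; rewrite hmu; apply: hK.
rewrite /theta; apply: ge_sup.
  exists (mu (compound k (1%:M : 'M[R[i]]_n))), 1%:M => //= i.
  exact: lp_col1.
move=> _ [B hB <-].
pose e b := lp r (col b B).
have ep : forall b, 0 < e b by move=> b; apply: (lp_pos p0 r0 (hB b)).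
pose B' := \matrix_(a, b) (B a b * ((e b)^-1)%:C).
have HB : B = \matrix_(a, b) (B' a b * (e b)%:C).
  apply/matrixP => a b; rewrite !mxE -mulrA -rmorphM /= mulVf ?gt_eqF //.
  by rewrite mulr1.
have hB' : forall b, lp r (col b B') = 1.
  move=> b; rewrite col_scale lp_scale // ?invr_ge0 ?ltW //.
  by rewrite mulVf ?gt_eqF.
rewrite HB compound_scale hmu.
have he : forall b, 0 <= e b <= s.
  move=> b; rewrite ltW //=; exact: lp_bound.
apply: le_trans (opnorm_diag (compound k B') mp hn ha (fun J => gJ_bound J s1 he)) _.
rewrite ler_wpM2l ?exprn_ge0 //.
apply: (ub_le_sup hub); exists B' => //; by rewrite hmu.
Qed.
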